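(* Let $q$ be a prime power and let $M$ be a $2\times 2$ matrix over $\mathbb{F}_{q^2}$ with two distinct eigenvalues $c_1,c_2$ and eigenvectors $u_1,u_2\in\mathbb{F}_{q^2}^2$ ($u_i$ an eigenvector for $c_i$) such that $\langle u_i,u_i\rangle=0$ for $i=1,2$. Then there is $o\in\mathbb{F}_{q^2}^*$ such that $\mathrm{Num}'_0(M)=\{to\}_{t\in\mathbb{F}_q}$.
   Context: The Hermitian form on $\mathbb{F}_{q^2}^n$ is $\langle u,v\rangle=\sum_i u_i^q v_i$. For an $n\times n$ matrix $M$ over $\mathbb{F}_{q^2}$ with $n\ge 2$, $\mathrm{Num}'_0(M)=\{\langle u,Mu\rangle: u\in\mathbb{F}_{q^2}^n\setminus\{0\},\ \langle u,u\rangle=0\}$. *)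

(* Defs.v *)
From HB Require Import structures.
From mathcomp Require Import all_boot all_order all_algebra all_field.
Set Implicit Arguments. Unset Strict Implicit. Unset Printing Implicit Defensive.
Import GRing.Theory.
Local Open Scope ring_scope.

(* Hermitian form on F^n (F = F_{q^2}), vectors are column vectors:
   <u,v> = \sum_i u_i^q v_i *)
Definition herm (F : finFieldType) (q n : nat) (u v : 'cV[F]_n) : F :=
  \sum_(i < n) (u i 0) ^+ q * v i 0.

Definition Num0' (F : finFieldType) (q n : nat) (M : 'M[F]_n) : F -> Prop :=
  fun x => exists u : 'cV[F]_n,
    u != 0 /\ herm q u u = 0 /\ x = herm q u (M *m u).

(* Main.v *)
Require Import Defs.
From HB Require Import structures.
From mathcomp Require Import all_boot all_order all_algebra all_field.
From mathcomp Require Import ring zify.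
Import GRing.Theory.
Local Open Scope ring_scope.

Notation i0 := (@ord0 1).
Notation i1 := (@ord_max 1).

Lemma hermE (F : finFieldType) q (u v : 'cV[F]_2) :
  herm q u v = u i0 0 ^+ q * v i0 0 + u i1 0 ^+ q * v i1 0.
Proof.
rewrite /herm big_ord_recl big_ord1.
have -> : lift i0 (@ord0 0) = i1 by apply/val_inj.
by [].
Qed.

Lemma cV2_eq (F : finFieldType) (u v : 'cV[F]_2) :
  u i0 0 = v i0 0 -> u i1 0 = v i1 0 -> u = v.
Proof.
move=> h0 h1; apply/matrixP=> i j.
have -> : j = 0 by apply/val_inj; case: j => [[]].
case: i => [[|[|//]] Hi].
  by rewrite (_ : Ordinal Hi = i0) //; apply/val_inj.
by rewrite (_ : Ordinal Hi = i1) //; apply/val_inj.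
Qed.

Theorem proposition3 (q : nat) (F : finFieldType)
  (hq : exists p k : nat, prime p /\ (0 < k)%N /\ q = (p ^ k)%N)
  (hF : #|F| = (q ^ 2)%N)
  (M : 'M[F]_2) (c1 c2 : F) (u1 u2 : 'cV[F]_2)
  (hc : c1 != c2)
  (hu1 : u1 != 0) (hu2 : u2 != 0)
  (he1 : M *m u1 = c1 *: u1) (he2 : M *m u2 = c2 *: u2)
  (hi1 : herm q u1 u1 = 0) (hi2 : herm q u2 u2 = 0) :
  exists o : F, o != 0 /\
    (forall x : F, Num0' q M x <-> exists t : F, t ^+ q = t /\ x = t * o).
Proof.
case: hq => p [k [pr [k0 qE]]].
have q1 : (1 < q)%N.
  by rewrite qE -(expn0 p) ltn_exp2l ?prime_gt1.
have q0 : (0 < q)%N by apply: ltnW.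
have chp : p \in [pchar F].
  apply: (@card_finPcharP F p (k * 2)) => //.
  by rewrite hF qE expnM.
have cjD : forall x y : F, (x + y) ^+ q = x ^+ q + y ^+ q.
  move=> x y; apply: exprDn_pchar.
  by rewrite qE pnatX pnatE // chp.
have cjK : forall x : F, (x ^+ q) ^+ q = x.
  by move=> x; rewrite -exprM mulnn -hF expf_card.
have cj0 : (0 : F) ^+ q = 0 by rewrite expr0n eqn0Ngt q0.
have cjN : forall x : F, (- x) ^+ q = - x ^+ q.
  move=> x; apply/eqP; rewrite -subr_eq0 opprK addrC -cjD.
  by rewrite subrr cj0.
have hlin : forall (a b c d : F) (x y : 'cV[F]_2),
   herm q (a *: x + b *: y) (c *: x + d *: y) =
   a ^+ q * c * herm q x x + a ^+ q * d * herm q x y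
   + b ^+ q * c * herm q y x + b ^+ q * d * herm q y y.
  move=> a b c d x y; rewrite !hermE !mxE !cjD !exprMn.
  ring.
have hsym : forall x y : 'cV[F]_2, herm q y x = (herm q x y) ^+ q.
  move=> x y; rewrite !hermE cjD !exprMn !cjK; ring.
have hM : forall a b : F, M *m (a *: u1 + b *: u2) = (a * c1) *: u1 + (b * c2) *: u2.
  by move=> a b; rewrite mulmxDr -!scalemxAr he1 he2 !scalerA.
set w := herm q u1 u2.
have key : forall a b : F,
   herm q (a *: u1 + b *: u2) (a *: u1 + b *: u2) =
     a ^+ q * b * w + (a ^+ q * b * w) ^+ q /\
   herm q (a *: u1 + b *: u2) (M *m (a *: u1 + b *: u2)) =
     c2 * (a ^+ q * b * w) + c1 * (a ^+ q * b * w) ^+ q.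
  move=> a b; rewrite hM !hlin hi1 hi2 (hsym u1 u2) -/w !exprMn cjK; split; ring.
have decomp : forall u : 'cV[F]_2, exists a b : F, u = a *: u1 + b *: u2.
  set D := u1 i0 0 * u2 i1 0 - u2 i0 0 * u1 i1 0.
  have D0 : D != 0.
    apply/negP => /eqP D0.
    have [l hl] : exists l : F, u1 = l *: u2.
      have : (u2 i0 0 != 0) || (u2 i1 0 != 0).
        rewrite -negb_and; apply/negP => /andP [/eqP a0 /eqP a1].
        move/negP: hu2; apply; apply/eqP; apply: cV2_eq; by rewrite mxE.
      case/orP => nz.
        exists (u1 i0 0 / u2 i0 0); apply: cV2_eq; rewrite mxE.
          by rewrite mulfVK.
        move/eqP: D0; rewrite subr_eq0 => /eqP DE.
        by rewrite mulrAC DE mulrAC divff // mul1r.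
      exists (u1 i1 0 / u2 i1 0); apply: cV2_eq; rewrite mxE; last by rewrite mulfVK.
      move/eqP: D0; rewrite subr_eq0 => /eqP DE.
      by rewrite mulrAC [u1 i1 0 * _]mulrC -DE mulfK.
    have : (c1 - c2) *: u1 = 0.
      rewrite scalerBl -he1 {1}hl -scalemxAr he2 scalerA mulrC -scalerA -hl.
      by rewrite subrr.
    by move/eqP; rewrite scalemx_eq0 subr_eq0 (negbTE hc) (negbTE hu1).
  move=> u.
  exists ((u i0 0 * u2 i1 0 - u2 i0 0 * u i1 0) / D).
  exists ((u1 i0 0 * u i1 0 - u i0 0 * u1 i1 0) / D).
  apply: cV2_eq; rewrite !mxE; rewrite /D; field; exact: D0.
have w0 : w != 0.
  apply/negP => /eqP w0.
  have orth : forall u, herm q u1 u = 0.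
    move=> u; have [a [b ->]] := decomp u.
    have -> : herm q u1 (a *: u1 + b *: u2) = herm q (1 *: u1 + 0 *: u2) (a *: u1 + b *: u2).
      by rewrite scale1r scale0r addr0.
    rewrite hlin hi1 hi2 -/w w0 cj0; ring.
  move/negP: hu1; apply; apply/eqP; apply: cV2_eq.
    have := orth (\col_i (if i == i0 then 1 else 0)).
    rewrite hermE !mxE /= mulr1 mulr0 addr0 => /eqP; rewrite expf_eq0 => /andP [_ /eqP ->].
    by [].
  have := orth (\col_i (if i == i1 then 1 else 0)).
  rewrite hermE !mxE /= mulr1 mulr0 add0r => /eqP; rewrite expf_eq0 => /andP [_ /eqP ->].
  by [].
(* element with trace zero *)
have [x0 hx0] : exists x0 : F, x0 ^+ q != x0.
  case: (boolP [exists x : F, x ^+ q != x]) => [/existsP [x hx]| hn]; first by exists x.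
  exfalso.
  have hall : forall x : F, x ^+ q = x.
    move=> x; apply/eqP; apply: contraNT hn => h; apply/existsP; by exists x.
  have sz : size ('X^q - 'X : {poly F}) = q.+1.
    by rewrite size_polyDl ?size_polyXn // size_polyN size_polyX ltnS.
  have pn0 : ('X^q - 'X : {poly F}) != 0 by rewrite -size_poly_eq0 sz.
  have := max_poly_roots pn0 (rs := enum F) _ (enum_uniq _).
  rewrite -cardE hF sz -mulnn.
  have -> : all (root ('X^q - 'X)) (enum F).
    by apply/allP => x _; rewrite rootE !hornerE hall subrr.
  move=> /(_ isT); move: q1; clear; move=> q1 h; nia.
set s0 := x0 - x0 ^+ q.
have s00 : s0 != 0 by rewrite subr_eq0 eq_sym.
have s0q : s0 ^+ q = - s0 by rewrite /s0 cjD cjN cjK opprB.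
exists ((c2 - c1) * s0); split.
  by rewrite mulf_neq0 // subr_eq0 eq_sym.
move=> x; split.
  case=> u [un0 [huu ->]].
  have [a [b uE]] := decomp u.
  rewrite uE in huu *.
  have [k1 k2] := key a b.
  rewrite k2; rewrite k1 in huu.
  move: huu; set s := a ^+ q * b * w => huu.
  have sq : s ^+ q = - s by apply/eqP; rewrite -subr_eq0 opprK addrC huu.
  exists (s / s0); split.
    by rewrite exprMn exprVn sq s0q invrN mulrNN.
  rewrite sq; field; exact: s00.
case=> t [ht ->].
set s := t * s0.
have sq : s ^+ q = - s by rewrite exprMn ht s0q mulrN.
exists (1 *: u1 + (s / w) *: u2).
have [k1 k2] := key 1 (s / w).
have sE : 1 ^+ q * (s / w) * w = s by rewrite expr1n mul1r divfK.
rewrite sE in k1 k2.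
split; [|split].
- apply/eqP => u0.
  have : herm q (1 *: u1 + (s / w) *: u2) (0 *: u1 + 1 *: u2) = w.
    rewrite hlin hi1 hi2 -/w expr1n; ring.
  rewrite u0 hermE !mxE cj0 !mul0r addr0 => /esym/eqP.
  by rewrite (negbTE w0).
- by rewrite k1 sq addrN.
- rewrite k2 sq /s; ring.
Qed.
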